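(* Let $$\Delta t_{\mathrm{CFL}}=\frac{2}{\frac{2\hbar}{m}\left(\frac{1}{(\Delta x)^2}+\frac{1}{(\Delta y)^2}+\frac{1}{(\Delta z)^2}\right)+\frac{\max_{i,j,k}|U_{i,j,k}|}{\hbar}}$$ be the CFL limit of the whole region, and for $1\le i\le n_x$, $1\le j\le n_y$, $1\le k\le n_z$ let $\Delta t^{(i,j,k)}_{\mathrm{CFL,gen}}$ be the generalized CFL limit of the single-cell region ($n_x=n_y=n_z=1$) formed by the primary cell with corners $(i,j,k)$ and $(i+1,j+1,k+1)$, with potential $U_{i+a,j+b,k+c}$ ($a,b,c\in\{0,1\}$) at its local node $(a+1,b+1,c+1)$. Then $$\Delta t_{\mathrm{CFL}}\le\min_{i,j,k}\Delta t^{(i,j,k)}_{\mathrm{CFL,gen}}.$$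
   Context: Fix constants $\hbar>0$, $m>0$, cell sizes $\Delta x,\Delta y,\Delta z>0$ and positive integers $n_x,n_y,n_z$. The region is a box of $n_x\times n_y\times n_z$ primary cells of size $\Delta x\times\Delta y\times\Delta z$ with primary nodes $(i,j,k)$, $1\le i\le n_x+1$, $1\le j\le n_y+1$, $1\le k\le n_z+1$, carrying real potential values $U_{i,j,k}$. For a single-cell region (local nodes $(a+1,b+1,c+1)$, $a,b,c\in\{0,1\}$, ordered by $(a+1)+2b+4c$), let $D_U$ be the $8\times 8$ diagonal matrix of its node potentials, $I_p$ the $p\times p$ identity, $W_1=[-1\ \ 1]$, $\otimes$ the Kronecker product, and define $D_V''=\frac{\Delta x\Delta y\Delta z}{8}I_8$; $D=-[I_2\otimes I_2\otimes W_1^T\ \ I_2\otimes W_1^T\otimes I_2\ \ W_1^T\otimes I_2\otimes I_2]$; $D_S''=\mathrm{diag}(\frac{\Delta y\Delta z}{4}I_4,\frac{\Delta x\Delta z}{4}I_4,\frac{\Delta x\Delta y}{4}I_4)$; $D_l'=\mathrm{diag}(\Delta x I_4,\Delta y I_4,\Delta z I_4)$; $H=\frac{\hbar^2}{2m}D D_S''(D_l')^{-1}D^T+D_V''D_U$. Its generalized CFL limit is $2/\rho\!\left(\frac{1}{\hbar}(D_V'')^{-1/2}H(D_V'')^{-1/2}\right)$, with $\rho$ the spectral radius. *)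

(* Defs.v *)
From HB Require Import structures.
From mathcomp Require Import all_boot all_order all_algebra.
From mathcomp Require Import complex mxtens.
From mathcomp Require Import boolp classical_sets reals.
Set Implicit Arguments.
Unset Strict Implicit.
Unset Printing Implicit Defensive.
Import Order.TTheory GRing.Theory Num.Theory.
Local Open Scope ring_scope.
Local Open Scope classical_set_scope.

Notation "A *t B" := (tensmx A B)
  (at level 40, left associativity, format "A  *t  B") : ring_scope.

Definition spectral_radius (R : realType) (n : nat) (A : 'M[R]_n) : R :=
  sup [set r : R | exists z : R[i],
         eigenvalue (map_mx (fun x => x%:C%C) A) z /\ r%:C%C = `|z|].

Definition W1 (R : realType) : 'M[R]_(1, 2) := \row_(j < 2) (if j == 0 then -1 else 1).

Definition Dmat (R : realType) : 'M[R]_(8, 4 + 4 + 4) :=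
  - row_mx (row_mx
      ((1%:M : 'M[R]_2) *t (1%:M : 'M[R]_2) *t (W1 R)^T : 'M[R]_(8, 4))
      ((1%:M : 'M[R]_2) *t (W1 R)^T *t (1%:M : 'M[R]_2) : 'M[R]_(8, 4)))
      ((W1 R)^T *t (1%:M : 'M[R]_2) *t (1%:M : 'M[R]_2) : 'M[R]_(8, 4)).

Definition diag3 (R : realType) (a b c : R) : 'M[R]_(4 + 4 + 4) :=
  diag_mx (row_mx (row_mx (const_mx a : 'rV[R]_4) (const_mx b)) (const_mx c)).

Definition DV (R : realType) (dx dy dz : R) : 'M[R]_8 :=
  (dx * dy * dz / 8) *: 1%:M.
Definition DV_invsqrt (R : realType) (dx dy dz : R) : 'M[R]_8 :=
  (Num.sqrt (dx * dy * dz / 8))^-1 *: 1%:M.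
Definition DS (R : realType) (dx dy dz : R) : 'M[R]_(4 + 4 + 4) :=
  diag3 (dy * dz / 4) (dx * dz / 4) (dx * dy / 4).
Definition Dl (R : realType) (dx dy dz : R) : 'M[R]_(4 + 4 + 4) :=
  diag3 dx dy dz.

(* local node l (0-based, l = a + 2b + 4c) has offsets a, b, c *)
Definition loc_a (l : 'I_8) : nat := l %% 2.
Definition loc_b (l : 'I_8) : nat := (l %/ 2) %% 2.
Definition loc_c (l : 'I_8) : nat := l %/ 4.

Definition Hcell (R : realType) (hbar m dx dy dz : R) (Uloc : 'I_8 -> R)
  : 'M[R]_8 :=
  (hbar ^+ 2 / (2 * m)) *:
     (Dmat R *m DS dx dy dz *m invmx (Dl dx dy dz) *m (Dmat R)^T)
  + DV dx dy dz *m diag_mx (\row_l Uloc l).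

Definition dt_CFL_gen (R : realType) (hbar m dx dy dz : R) (Uloc : 'I_8 -> R)
  : R :=
  2 / spectral_radius
        (hbar^-1 *: (DV_invsqrt dx dy dz *m Hcell hbar m dx dy dz Uloc
                       *m DV_invsqrt dx dy dz)).

(* CFL limit of the whole region; U is indexed by 0-based nodes
   (paper node (i,j,k) = our (i-1,j-1,k-1)). *)
Definition dt_CFL (R : realType) (hbar m dx dy dz : R) (nx ny nz : nat)
  (U : 'I_nx.+1 -> 'I_ny.+1 -> 'I_nz.+1 -> R) : R :=
  2 / ((2 * hbar / m) * (dx ^- 2 + dy ^- 2 + dz ^- 2)
       + (\big[Num.max/0]_(i < nx.+1) \big[Num.max/0]_(j < ny.+1)
            \big[Num.max/0]_(k < nz.+1) `|U i j k|) / hbar).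

Definition cellU (R : realType) (nx ny nz : nat)
  (U : 'I_nx.+1 -> 'I_ny.+1 -> 'I_nz.+1 -> R)
  (i : 'I_nx) (j : 'I_ny) (k : 'I_nz) : 'I_8 -> R :=
  fun l => U (inord (i + loc_a l)) (inord (j + loc_b l)) (inord (k + loc_c l)).

(* Main.v *)
Require Import Defs.
From HB Require Import structures.
From mathcomp Require Import all_boot all_order all_algebra.
From mathcomp Require Import complex mxtens.
From mathcomp Require Import boolp classical_sets reals.
From mathcomp Require Import ring lra zify.
Import Order.TTheory GRing.Theory Num.Theory.

Definition sgnz (x : nat) : int := if x == 0 then 1%R else (-1)%R.
Definition Dint (l e : nat) : int :=
  let a := l %% 2 in let b := l %/ 2 %% 2 in let c := l %/ 4 in
  if e < 4 then (if l %/ 2 == e then sgnz a else 0%R)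
  else if e < 8 then (if 2 * c + a == e - 4 then sgnz b else 0%R)
  else (if 2 * b + a == e - 8 then sgnz c else 0%R).
Local Open Scope ring_scope.

Lemma DmatE (R : realType) (l : 'I_8) (e : 'I_(4+4+4)) :
  Dmat R l e = (Dint l e)%:~R.
Proof.
rewrite /Dmat mxE mxE; case: (@splitP (4+4) 4 e) => [e1 He|e2 He].
  rewrite mxE; case: (@splitP 4 4 e1) => [e3 He3|e4 He4].
    rewrite He He3 mxE.
    case: l => [[|[|[|[|[|[|[|[|//]]]]]]]] Hl];
    case: e3 He3 => [[|[|[|[|//]]]] He3'] /= _; rewrite !mxE /=;
    by rewrite /Dint /sgnz /= ?mulrN ?mulNr ?mulr1 ?mul1r ?mul0r ?mulr0 ?opprK ?oppr0.
  rewrite He He4 mxE.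
  case: l => [[|[|[|[|[|[|[|[|//]]]]]]]] Hl];
  case: e4 He4 => [[|[|[|[|//]]]] He4'] /= _; rewrite !mxE /=;
  by rewrite /Dint /sgnz /= ?mulrN ?mulNr ?mulr1 ?mul1r ?mul0r ?mulr0 ?opprK ?oppr0.
rewrite He mxE.
case: l => [[|[|[|[|[|[|[|[|//]]]]]]]] Hl];
case: e2 He => [[|[|[|[|//]]]] He2'] /= _; rewrite !mxE /=;
by rewrite /Dint /sgnz /= ?mulrN ?mulNr ?mulr1 ?mul1r ?mul0r ?mulr0 ?opprK ?oppr0.
Qed.

Lemma normC_real (R : realType) (x : R) : `|x%:C%C| = `|x|%:C%C.
Proof. by rewrite normc_def /= expr0n /= addr0 sqrtr_sqr. Qed.

Lemma normC_re (R : realType) (x : R[i]) : `|x| = (complex.Re (`|x| : R[i]))%:C%C.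
Proof. by rewrite RRe_real // normr_real. Qed.

Lemma gersh (R : realType) n (A : 'M[R]_n) (z : R[i]) :
  eigenvalue (map_mx (fun x => x%:C%C) A) z ->
  exists j, `|z| <= (\sum_i `|A i j|)%:C%C.
Proof.
move/eigenvalueP => [v Hv v0].
have [i0 [j0 Hj0]] := matrix0Pn _ v0.
rewrite (ord1 i0) in Hj0.
set f := fun j => complex.Re (`|v 0 j| : R[i]).
pose j := Order.arg_max j0 xpredT f.
have Hmax : forall k, f k <= f j.
  by rewrite /j; case: (arg_maxP (i0:=j0) (P:=xpredT) f isT) => // jj _ H k; apply: H.
exists j.
have Hvj : 0 < `|v 0 j|.
  rewrite normC_re ltcR; apply: lt_le_trans (Hmax j0).
  by rewrite -ltcR -normC_re normr_gt0.
have E : z * v 0 j = \sum_i v 0 i * (A i j)%:C%C.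
  move/matrixP: Hv => /(_ 0 j); rewrite !mxE => <-.
  by apply: eq_bigr => i _; rewrite mxE.
rewrite -(ler_pM2r Hvj) -normrM E.
apply: le_trans (ler_norm_sum _ _ _) _.
rewrite rmorph_sum mulr_suml; apply: ler_sum => i _.
rewrite normrM normC_real mulrC.
apply: ler_wpM2l; first by rewrite ler0c normr_ge0.
by rewrite normC_re [X in _ <= X]normC_re lecR; apply: Hmax.
Qed.

Lemma allroot0 (F : closedFieldType) (p : {poly F}) :
  p \is monic -> (forall z, root p z -> z = 0) -> p = 'X^((size p).-1).
Proof.
move Hn: (size p) => n; elim: n p Hn => [|n IH] p Hn pm Hr.
  by move: (monic_neq0 pm); rewrite -size_poly_eq0 Hn.
case: n IH Hn => [|n] IH Hn.
  have [c Hc] : exists c, p = c%:P by exists (p`_0); apply/size1_polyC; rewrite Hn.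
  move: pm; rewrite Hc monicE lead_coefC => /eqP ->; by rewrite expr0.
have : size p != 1 by rewrite Hn.
case/closed_rootP => x Hx; have x0 := Hr _ Hx; subst x.
case/factor_theorem: Hx => q Hq.
rewrite subr0 in Hq.
have qm : q \is monic by rewrite Hq monicMr ?monicX in pm.
have Hsq : size q = n.+1.
  by move: Hn; rewrite Hq size_mulX ?monic_neq0 //; case.
have Eq : q = 'X^n by rewrite (IH q Hsq qm) ?Hsq // => z Hz; apply: Hr; rewrite Hq rootM Hz.
by rewrite Hq Eq -exprSr.
Qed.

Lemma sym_sq0 (R : realType) n (S : 'M[R]_n) : S^T = S -> S *m S = 0 -> S = 0.
Proof.
move=> HS H0; apply/matrixP => i j; rewrite mxE.
have : (S *m S) i i = 0 by rewrite H0 mxE.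
rewrite mxE => /eqP; rewrite psumr_eq0 => [/allP /(_ j)|k _].
  rewrite mem_index_enum => /(_ isT) /eqP.
  have -> : S j i = S i j by rewrite -[in LHS]HS mxE.
  by move/eqP; rewrite mulf_eq0 orbb => /eqP.
have -> : S k i = S i k by rewrite -[in LHS]HS mxE.
by rewrite -expr2 sqr_ge0.
Qed.

Lemma trX (R : realType) n (A : 'M[R]_n) k : A^T = A -> (A ^+ k)^T = A ^+ k.
Proof.
move=> HA; elim: k => [|k IH]; first by rewrite expr0 trmx1.
by rewrite exprS -mulmxE trmx_mul IH HA mulmxE -exprSr exprS.
Qed.

Lemma sym_nil0 (R : realType) n (A : 'M[R]_n) k : A^T = A -> A ^+ k = 0 -> A = 0.
Proof.
move=> HA Hk.
suff H : forall m, A ^+ (2 ^ m) = 0 -> A = 0.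
  apply: (H k); rewrite -(subnKC (ltnW (ltn_expl k (ltnSn 1)))) exprD Hk mul0r //.
elim=> [|m IH]; first by rewrite expn0 expr1.
rewrite expnS mul2n -addnn exprD => H2; apply: IH.
by apply: sym_sq0; [exact: trX | rewrite mulmxE].
Qed.

Lemma map_mxX (R : realType) n (A : 'M[R]_n) k :
  map_mx (fun x => x%:C%C) (A ^+ k) = (map_mx (fun x => x%:C%C) A) ^+ k.
Proof.
elim: k => [|k IH]; first by rewrite !expr0; apply/matrixP => i j; rewrite !mxE; case: (i == j).
by rewrite !exprS -!mulmxE map_mxM IH.
Qed.

Lemma eig_nz (R : realType) n (A : 'M[R]_n.+1) : A^T = A -> A != 0 ->
  exists z, eigenvalue (map_mx (fun x => x%:C%C) A) z /\ z != 0.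
Proof.
move=> HS HA; apply: contrapT => Hno.
set B := map_mx (fun x => x%:C%C) A.
have H0 : forall z, root (char_poly B) z -> z = 0.
  move=> z; rewrite -eigenvalue_root_char => Hz; apply: contrapT => nz.
  by apply: Hno; exists z; split => //; apply/eqP.
have Hc := @allroot0 _ _ (char_poly_monic B) H0; rewrite size_char_poly /= in Hc.
have := Cayley_Hamilton B; rewrite Hc rmorphXn /= horner_mx_X => HB.
have HAk : A ^+ n.+1 = 0.
  apply/matrixP => i j; move: HB; rewrite -map_mxX => /matrixP /(_ i j).
  by rewrite !mxE => -[].
by move: HA; rewrite (@sym_nil0 _ _ _ _ HS HAk) eqxx.
Qed.

Definition wfun {R : realType} (a b c : R) (e : 'I_(4+4+4)) : R :=
  if (e < 4)%N then a else if (e < 8)%N then b else c.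

Lemma diag3E (R : realType) (a b c : R) : diag3 a b c = diag_mx (\row_e wfun a b c e).
Proof.
congr diag_mx; apply/rowP => e; rewrite !mxE /wfun.
case: (@splitP (4+4) 4 e) => [e1 He|e2 He]; rewrite mxE.
  case: (@splitP 4 4 e1) => [e3 He3|e4 He4]; rewrite mxE.
    have := ltn_ord e3; have := ltn_ord e1.
    by repeat case: ifP => //; lia.
  have := ltn_ord e4; have := ltn_ord e1.
  by repeat case: ifP => //; lia.
have := ltn_ord e2.
by repeat case: ifP => //; lia.
Qed.

Lemma wfunM (R : realType) (a b c a' b' c' : R) e :
  wfun a b c e * wfun a' b' c' e = wfun (a * a') (b * b') (c * c') e.
Proof. by rewrite /wfun; case: ifP => _ //; case: ifP. Qed.

Lemma invDl (R : realType) (dx dy dz : R) : dx != 0 -> dy != 0 -> dz != 0 ->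
  invmx (Dl dx dy dz) = diag3 dx^-1 dy^-1 dz^-1.
Proof.
move=> hx hy hz.
have HE : Dl dx dy dz *m diag3 dx^-1 dy^-1 dz^-1 = 1%:M.
  rewrite /Dl !diag3E mulmx_diag; apply/matrixP => i j; rewrite !mxE wfunM.
  by rewrite /wfun !mulfV //; case: ifP => _ //; case: ifP.
have [Hu _] := mulmx1_unit HE.
by rewrite -[diag3 _ _ _](mulKmx Hu) HE mulmx1.
Qed.

Definition Amat {R : realType} (hbar m dx dy dz : R) (Uloc : 'I_8 -> R) : 'M[R]_8 :=
  hbar^-1 *: (DV_invsqrt dx dy dz *m Hcell hbar m dx dy dz Uloc *m DV_invsqrt dx dy dz).

Lemma AmatE (R : realType) (hbar m dx dy dz : R) (Uloc : 'I_8 -> R) i j :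
  0 < hbar -> 0 < m -> 0 < dx -> 0 < dy -> 0 < dz ->
  Amat hbar m dx dy dz Uloc i j =
  hbar / (2 * m * (dx * dy * dz / 8)) *
    (\sum_e Dmat R i e * wfun (dy * dz / 4 / dx) (dx * dz / 4 / dy) (dx * dy / 4 / dz) e
            * Dmat R j e)
  + (i == j)%:R * (Uloc j / hbar).
Proof.
move=> hh hm hx hy hz.
rewrite /Amat /DV_invsqrt /Hcell /DV !scalemx1 mul_scalar_mx mul_mx_scalar mul_scalar_mx.
rewrite (@invDl R _ _ _ (lt0r_neq0 hx) (lt0r_neq0 hy) (lt0r_neq0 hz)) /DS !diag3E.
move: (Dmat R) => D.
rewrite -(mulmxA D) mulmx_diag mul_mx_diag.
rewrite !mxE.
under eq_bigr do rewrite !mxE wfunM.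
set S := \sum_(e < _) _.
set v := dx * dy * dz / 8.
have hv : 0 < v by rewrite /v !divr_gt0 ?mulr_gt0.
have Hs : (Num.sqrt v)^-1 * (Num.sqrt v)^-1 = v^-1.
  by rewrite -invfM -expr2 sqr_sqrtr // ltW.
rewrite [X in hbar^-1 * X]mulrA Hs.
have hh0 := lt0r_neq0 hh; have hm0 := lt0r_neq0 hm; have hv0 := lt0r_neq0 hv.
case: (eqVneq i j) => [->|nij]; rewrite ?mulr1n ?mulr0n ?mulr0 ?mul0r; field; by rewrite ?hh0 ?hm0 ?hv0.
Qed.

Lemma F1 (R : realType) (e : 'I_(4+4+4)) : \sum_(i < 8) `|Dmat R i e| = 2.
Proof.
under eq_bigr do rewrite DmatE.
rewrite !big_ord_recr big_ord0 /=.
case: e => [[|[|[|[|[|[|[|[|[|[|[|[|//]]]]]]]]]]]]] He;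
rewrite /Dint /sgnz /= ?normrN ?normr1 ?normr0; lra.
Qed.

Lemma F2 (R : realType) (a b c : R) (j : 'I_8) :
  \sum_(e < 4+4+4) wfun a b c e * `|Dmat R j e| = a + b + c.
Proof.
under eq_bigr do rewrite DmatE.
rewrite !big_ord_recr big_ord0 /=.
case: j => [[|[|[|[|[|[|[|[|//]]]]]]]]] Hj;
rewrite /Dint /sgnz /wfun /= ?normrN ?normr1 ?normr0; lra.
Qed.

Lemma F3 (R : realType) (a b c : R) :
  \sum_(e < 4+4+4) Dmat R (@Ordinal 8 0 isT) e * wfun a b c e * Dmat R (@Ordinal 8 1 isT) e = - a.
Proof.
under eq_bigr do rewrite !DmatE.
rewrite !big_ord_recr big_ord0 /=.
rewrite /Dint /sgnz /wfun /=; lra.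
Qed.

Ltac pos := repeat (first [ assumption | rewrite invr_gt0 | apply: mulr_gt0 | lra ]).

Lemma wfun_ge0 (R : realType) (a b c : R) e : 0 <= a -> 0 <= b -> 0 <= c -> 0 <= wfun a b c e.
Proof. by move=> ha hb hc; rewrite /wfun; case: ifP => _ //; case: ifP. Qed.

Lemma Asym (R : realType) (hbar m dx dy dz : R) (Uloc : 'I_8 -> R) :
  0 < hbar -> 0 < m -> 0 < dx -> 0 < dy -> 0 < dz ->
  (Amat hbar m dx dy dz Uloc)^T = Amat hbar m dx dy dz Uloc.
Proof.
move=> hh hm hx hy hz; apply/matrixP => i j; rewrite mxE !AmatE //.
congr (_ * _ + _); first by apply: eq_bigr => e _; ring.
by case: (eqVneq i j) => [->|nij]; rewrite ?mul0r.
Qed.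

Lemma Anz (R : realType) (hbar m dx dy dz : R) (Uloc : 'I_8 -> R) :
  0 < hbar -> 0 < m -> 0 < dx -> 0 < dy -> 0 < dz ->
  Amat hbar m dx dy dz Uloc != 0.
Proof.
move=> hh hm hx hy hz; apply/matrix0Pn; exists (@Ordinal 8 0 isT), (@Ordinal 8 1 isT).
rewrite AmatE // F3 /= mul0r addr0.
by rewrite mulf_neq0 // ?oppr_eq0 lt0r_neq0 //; pos.
Qed.

Lemma Acol (R : realType) (hbar m dx dy dz : R) (Uloc : 'I_8 -> R) j :
  0 < hbar -> 0 < m -> 0 < dx -> 0 < dy -> 0 < dz ->
  \sum_i `|Amat hbar m dx dy dz Uloc i j| <=
  (2 * hbar / m) * (dx ^- 2 + dy ^- 2 + dz ^- 2) + `|Uloc j| / hbar.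
Proof.
move=> hh hm hx hy hz.
set wx := dy * dz / 4 / dx; set wy := dx * dz / 4 / dy; set wz := dx * dy / 4 / dz.
set K := hbar / (2 * m * (dx * dy * dz / 8)).
have HK : 0 < K by rewrite /K; pos.
have hw : forall e, 0 <= wfun wx wy wz e.
  by move=> e; apply: wfun_ge0; apply: ltW; rewrite /wx /wy /wz; pos.
have ineq : forall i, `|Amat hbar m dx dy dz Uloc i j| <=
    K * (\sum_e `|Dmat R i e| * wfun wx wy wz e * `|Dmat R j e|)
    + (i == j)%:R * (`|Uloc j| / hbar).
  move=> i; rewrite AmatE //; apply: le_trans (ler_normD _ _) _; apply: lerD.
    rewrite normrM (gtr0_norm HK); apply: ler_wpM2l; first exact: ltW HK.
    apply: le_trans (ler_norm_sum _ _ _) _; apply: ler_sum => e _.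
    by rewrite !normrM (ger0_norm (hw e)).
  by rewrite normrM normr_nat normrM normfV (gtr0_norm hh).
apply: le_trans (ler_sum _ (fun i _ => ineq i)) _.
rewrite big_split /= -mulr_sumr.
have Hind : \sum_i (i == j)%:R * (`|Uloc j| / hbar) = `|Uloc j| / hbar.
  rewrite (bigD1 j) //= eqxx mul1r big1 ?addr0 // => i /negbTE ->; by rewrite mul0r.
rewrite Hind.
have Hsum : \sum_i \sum_e `|Dmat R i e| * wfun wx wy wz e * `|Dmat R j e| = 2 * (wx + wy + wz).
  rewrite exchange_big /=.
  rewrite (eq_bigr (fun e => (\sum_i `|Dmat R i e|) * (wfun wx wy wz e * `|Dmat R j e|))); last first.
    by move=> e _; rewrite mulr_suml; apply: eq_bigr => i _; rewrite mulrA.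
  under eq_bigr do rewrite F1.
  by rewrite -mulr_sumr F2.
rewrite lerD2r Hsum le_eqVlt; apply/orP; left; apply/eqP.
have hx0 := lt0r_neq0 hx; have hy0 := lt0r_neq0 hy; have hz0 := lt0r_neq0 hz.
have hm0 := lt0r_neq0 hm.
rewrite /K /wx /wy /wz; field; by rewrite ?hx0 ?hy0 ?hz0 ?hm0.
Qed.

Lemma cell_bound (R : realType) (hbar m dx dy dz : R) (Uloc : 'I_8 -> R) (Um : R) :
  0 < hbar -> 0 < m -> 0 < dx -> 0 < dy -> 0 < dz ->
  (forall l, `|Uloc l| <= Um) ->
  2 / ((2 * hbar / m) * (dx ^- 2 + dy ^- 2 + dz ^- 2) + Um / hbar)
  <= dt_CFL_gen hbar m dx dy dz Uloc.
Proof.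
move=> hh hm hx hy hz hU.
set den := (2 * hbar / m) * _ + _.
have hUm : 0 <= Um by apply: le_trans (hU (@Ordinal 8 0 isT)).
have hden : 0 < den.
  rewrite /den; apply: ltr_wpDr; first by apply: divr_ge0 => //; apply: ltW.
  apply: mulr_gt0; first by pos.
  by rewrite -!exprVn; apply: addr_gt0; [apply: addr_gt0|]; apply: exprn_gt0; rewrite invr_gt0.
change (2 / den <= 2 / spectral_radius (Amat hbar m dx dy dz Uloc)).
rewrite /spectral_radius.
set S := (X in sup X).
have ub : ubound S den.
  move=> r [z [Hz Hr]]; have [j Hj] := @gersh _ _ _ _ Hz.
  rewrite -lecR Hr; apply: le_trans Hj _; rewrite lecR.
  apply: le_trans (@Acol _ _ _ _ _ _ _ j hh hm hx hy hz) _.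
  rewrite lerD2l; apply: ler_wpM2r (hU j); rewrite invr_ge0 ltW //.
have [z [Hz nz]] := @eig_nz _ _ _ (@Asym _ _ _ _ _ _ Uloc hh hm hx hy hz) (@Anz _ _ _ _ _ _ Uloc hh hm hx hy hz).
set r := complex.Re (`|z| : R[i]).
have Sr : S r by exists z; split => //; rewrite -normC_re.
have r0 : 0 < r by rewrite -ltcR -normC_re normr_gt0.
have hS : has_ubound S by exists den.
have rle := ub_le_sup hS Sr.
have rho_le : sup S <= den by apply: ge_sup => //; exists r.
have rho_pos : 0 < sup S := lt_le_trans r0 rle.
by rewrite ler_pM2l // lef_pV2 ?posrE.
Qed.

Local Open Scope classical_set_scope.

Theorem corollary1 (R : realType) (hbar m dx dy dz : R) (nx ny nz : nat)
  (U : 'I_nx.+1 -> 'I_ny.+1 -> 'I_nz.+1 -> R) :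
  0 < hbar -> 0 < m -> 0 < dx -> 0 < dy -> 0 < dz ->
  (0 < nx)%N -> (0 < ny)%N -> (0 < nz)%N ->
  dt_CFL hbar m dx dy dz U <=
  inf [set t : R | exists (i : 'I_nx) (j : 'I_ny) (k : 'I_nz),
         t = dt_CFL_gen hbar m dx dy dz (cellU U i j k)].
Proof.
move=> hh hm hx hy hz nx0 ny0 nz0.
apply: lb_le_inf.
  exists (dt_CFL_gen hbar m dx dy dz (cellU U (Ordinal nx0) (Ordinal ny0) (Ordinal nz0))).
  by exists (Ordinal nx0), (Ordinal ny0), (Ordinal nz0).
move=> t [i [j [k ->]]].
rewrite /dt_CFL; apply: cell_bound => // l.
rewrite /cellU.
set a := inord _; set b := inord _; set c := inord _.
apply: le_trans (le_bigmax _ (fun k => `|U a b k|) c) _.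
apply: le_trans (le_bigmax _ (fun j => \big[Num.max/0]_(k < nz.+1) `|U a j k|) b) _.
exact: (le_bigmax _ (fun i => \big[Num.max/0]_(j < ny.+1) \big[Num.max/0]_(k < nz.+1) `|U i j k|) a).
Qed.
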